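(* Let $F\in\mathcal{SF}_n$ be a rooted spanning forest on $[n]$ with non-root vertices $v_1,\dots,v_k$ listed in some order. Define $F_0$ to be the forest on $[n]$ with no edges (all vertices roots), and for $i=1,\dots,k$ let $F_i$ be obtained from $F_{i-1}$ by adding the edge $\{v_i,p(v_i)\}$ and setting $R(F_i)=R(F_{i-1})\setminus\{v_i\}$, so $F_k=F$. Then $F_0\lessdot F_1\lessdot\cdots\lessdot F_k$ is a saturated chain in $\mathcal{SF}_n$ if and only if the listing $v_1,\dots,v_k$ is a linear extension, i.e. whenever $v_i$ is a descendant of $v_j$ in $F$ we have $i<j$.
   Context: A rooted spanning forest on $[n]$ is a spanning forest of the complete graph on $[n]$ with one distinguished vertex (root) in each connected component; $E(F)$ is its edge set and $R(F)$ its set of roots. $\mathcal{SF}_n$ is the set of such forests ordered by $F_1\le F_2$ iff $E(F_1)\subseteq E(F_2)$ and $R(F_2)\subseteq R(F_1)$; equivalently $F_1\lessdot F_2$ iff $F_2$ is obtained from $F_1$ by adding an edge $\{x,y\}$ between two roots $x,y\in R(F_1)$ (of different trees) and keeping exactly one of $x,y$ as root. For a non-root vertex $y$, its parent $p(y)$ is the neighbor of $y$ on the unique path from $y$ to the root of its component; $x$ is an ancestor of $y$ (and $y$ a descendant of $x$) if $x$ lies on the path from $y$ to its root. *)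

(* Defs.v *)
From mathcomp Require Import all_boot.
Set Implicit Arguments. Unset Strict Implicit. Unset Printing Implicit Defensive.

Section RSF.
Variable n : nat.
Notation V := 'I_n.

(* A rooted spanning forest is given by its edge set E(F) (rf_edges = 2-element
   subsets of [n]) and its root set R(F). *)
Definition rforest := ({set {set V}} * {set V})%type.
Definition rf_edges (F : rforest) := F.1.
Definition rf_roots (F : rforest) := F.2.

Definition adj (E : {set {set V}}) : rel V :=
  fun x y => (x != y) && ([set x; y] \in E).

Definition is_forest (E : {set {set V}}) : Prop :=
  (forall e, e \in E -> #|e| = 2) /\
  (forall s : seq V, uniq s -> 3 <= size s -> ~~ cycle (adj E) s).

Definition is_rsf (F : rforest) : Prop :=
  is_forest (rf_edges F) /\
  forall x : V, #|[set r in rf_roots F | connect (adj (rf_edges F)) x r]| = 1.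

(* s is the (vertex sequence after y of the) path from y to the root of its component *)
Definition root_path (F : rforest) (y : V) (s : seq V) : bool :=
  [&& path (adj (rf_edges F)) y s, uniq (y :: s) & last y s \in rf_roots F].

Definition is_parent (F : rforest) (p y : V) : Prop :=
  exists s, root_path F y (p :: s).

Definition is_ancestor (F : rforest) (x y : V) : Prop :=
  exists s, root_path F y s /\ x \in y :: s.

Definition covers (F1 F2 : rforest) : Prop :=
  exists x y : V,
    [/\ x \in rf_roots F1, y \in rf_roots F1,
        ~~ connect (adj (rf_edges F1)) x y,
        rf_edges F2 = [set x; y] |: rf_edges F1 &
        rf_roots F2 = rf_roots F1 :\ y \/ rf_roots F2 = rf_roots F1 :\ x].

Definition Fi (p : V -> V) (v : seq V) (i : nat) : rforest :=
  ([set [set x; p x] | x in take i v], ~: [set x in take i v]).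

Definition saturated_chain (p : V -> V) (v : seq V) : Prop :=
  (forall i, i <= size v -> is_rsf (Fi p v i)) /\
  (forall i, i < size v -> covers (Fi p v i) (Fi p v i.+1)).

Definition linear_extension (F : rforest) (v : seq V) : Prop :=
  forall x y, x \in v -> y \in v -> x != y ->
    is_ancestor F y x -> index x v < index y v.

End RSF.

(* Main.v *)
Require Import Defs.
From mathcomp Require Import all_boot.
From mathcomp Require Import zify.
Set Implicit Arguments. Unset Strict Implicit. Unset Printing Implicit Defensive.

Lemma split_has (T : eqType) (P : pred T) (s : seq T) : has P s ->
  exists m z r, [/\ s = m ++ z :: r, ~~ has P m & P z].
Proof.
elim: s => //= x s IH /orP [Px | /IH [m [z [r [-> hm pz]]]]].
  by exists [::], x, s.
case Px: (P x).
  by exists [::], x, (m ++ z :: r).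
by exists (x :: m), z, r; rewrite /= Px.
Qed.

Section Aux.
Variable n : nat.
Notation V := 'I_n.

Lemma adj_sym (E : {set {set V}}) : symmetric (adj E).
Proof. by move=> x y; rewrite /adj eq_sym setUC. Qed.

Lemma forest_head (E : {set {set V}}) : is_forest E ->
  forall a s1 s2, path (adj E) a s1 -> path (adj E) a s2 ->
  uniq (a :: s1) -> uniq (a :: s2) -> s1 != [::] -> s2 != [::] ->
  last a s1 = last a s2 -> head a s1 = head a s2.
Proof.
move=> [_ Hac] a s1 s2 P1 P2 U1 U2 ne1 ne2 L.
apply/eqP/negPn/negP => Hne.
have bs1 : last a s1 \in s1.
  by move: ne1; case: (s1) => //= u t1 _; rewrite mem_last.
have bs2 : last a s1 \in s2.
  by rewrite L; move: ne2; case: (s2) => //= u t1 _; rewrite mem_last.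
have : has (mem s1) s2 by apply/hasP; exists (last a s1).
case/split_has => m [z [r [Es2 hm zs1]]].
have : has (pred1 z) s1 by apply/hasP; exists z => //=.
case/split_has => p1 [z' [p2 [Es1 _ /eqP ez]]]; subst z' s1 s2.
set c := a :: (p1 ++ z :: rev m).
have Uc : uniq c.
  have hm' : forall y, y \in m -> y \notin p1 ++ z :: p2.
    by move=> y ym; move/hasPn: hm => /(_ y ym).
  move: U1 U2; rewrite /c !cons_uniq !cat_uniq !cons_uniq !mem_cat !in_cons rev_uniq.
  move=> /andP[/norP[ap1 /norP[az _]] /and3P[up1 /hasPn hp1 _]].
  move=> /andP[/norP[am _] /and3P[um _ _]].
  rewrite mem_rev (negbTE ap1) (negbTE az) (negbTE am) up1 um /= andbT.
  rewrite (negbTE (hp1 z (mem_head _ _))) /=.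
  apply/andP; split.
    apply/hasPn => y; rewrite mem_rev => ym; move: (hm' y ym).
    by rewrite mem_cat in_cons => /norP[-> _].
  by rewrite mem_rev; apply/negP => zm; move: (hm' z zm); rewrite mem_cat in_cons eqxx orbT.
have Sc : 3 <= size c.
  rewrite /c /= size_cat /= size_rev.
  move: Hne; case: (p1) => [|? ?]; case: (m) => [|? ?] //=; first by rewrite eqxx.
  1-2: by move=> _; lia.
have := Hac c Uc Sc; apply/negP/negPn.
rewrite /c /= rcons_cat cat_path; apply/andP; split.
  by move: P1; rewrite cat_path => /andP[-> _].
rewrite /=; apply/andP; split.
  by move: P1; rewrite cat_path => /andP[_ /= /andP[-> _]].
have : path (adj E) a (rcons m z).
  by move: P2; rewrite cat_path rcons_path /= => /and3P[-> -> _].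
rewrite -rev_path belast_rcons last_rcons rev_cons /=.
by rewrite (@eq_path _ _ (adj E)) // => x y /=; rewrite adj_sym.
Qed.
End Aux.

Section Main.
Variable n : nat.
Notation V := 'I_n.
Variable p : V -> V.
Variable v : seq V.
Hypothesis Uv : uniq v.

Definition Et (t : seq V) := [set [set x; p x] | x in t].

Lemma adjE t a b : adj (Et t) a b -> (a \in t /\ b = p a) \/ (b \in t /\ a = p b).
Proof.
case/andP=> ab /imsetP [z zt Ez].
have : a \in [set z; p z] by rewrite -Ez set21.
have : b \in [set z; p z] by rewrite -Ez set22.
rewrite !inE => /orP[/eqP bz|/eqP bz] /orP[/eqP az|/eqP az]; subst.
- by rewrite eqxx in ab.
- by right.
- by left.
- by rewrite eqxx in ab.
Qed.

Lemma chainT t : forall s a b, path (adj (Et t)) b s -> uniq (a :: b :: s) ->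
  b \in t -> a = p b -> last b s \in t.
Proof.
elim=> [|c s IH] a b //= /andP[hbc hp] U bt ab.
case: (adjE hbc) => [[_ cpb]|[ct bpc]].
  by move: U; rewrite cpb -ab /= !inE eqxx !orbT.
apply: (IH b c hp _ ct bpc).
by move: U; rewrite /= => /andP[_ ->].
Qed.

Lemma root_path_nil t a s : path (adj (Et t)) a s -> uniq (a :: s) ->
  a \notin t -> last a s \notin t -> s = [::].
Proof.
case: s => [//|c s] /= /andP[hac hp] U an ln.
case: (adjE hac) => [[ain _]|[ct apc]]; first by rewrite ain in an.
have := chainT hp U ct apc.
by rewrite (negbTE ln).
Qed.

Lemma no_root_conn t a b : a \notin t -> b \notin t -> a != b ->
  ~~ connect (adj (Et t)) a b.
Proof.
move=> an bn ab; apply/negP => /connectP[s Ps Eb].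
move: Eb; case/shortenP: Ps => s' Ps' Us' _ Eb.
have Es' : s' = [::] by apply: (root_path_nil Ps' Us' an); rewrite -Eb.
by move: Eb ab; rewrite Es' /= => ->; rewrite eqxx.
Qed.

Lemma index_take_mem i x : x \in v -> (x \in take i v) = (index x v < i).
Proof.
move=> xv; rewrite -{2}(cat_take_drop i v) index_cat.
case: ifP => h.
  rewrite -index_mem size_take in h; symmetry.
  by case: (ltnP i (size v)) h => hh /= h //; exact: leq_trans h hh.
rewrite size_take; case: (ltnP i (size v)) => hi.
  by symmetry; apply/negbTE; rewrite -leqNgt leq_addr.
by rewrite take_oversize // xv in h.
Qed.

Lemma imset_rcons (f : V -> {set V}) t x :
  [set f z | z in rcons t x] = f x |: [set f z | z in t].
Proof.
apply/setP => e; rewrite in_setU1; apply/imsetP/orP.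
- case=> z; rewrite mem_rcons in_cons => /orP[/eqP-> ->|zt ->].
    by left.
  by right; apply: imset_f.
- case=> [/eqP->|/imsetP[z zt ->]].
    by exists x; rewrite // mem_rcons mem_head.
  by exists z; rewrite // mem_rcons in_cons zt orbT.
Qed.

Lemma seq_min (T : eqType) (f : T -> nat) (s : seq T) x0 : x0 \in s ->
  exists2 w, w \in s & forall y, y \in s -> f w <= f y.
Proof.
elim: s x0 => // a s IH x0 _.
case: s IH => [|b s'] IH.
  by exists a; rewrite ?mem_head // => y; rewrite inE => /eqP->.
have [w ws wm] := IH b (mem_head _ _).
case: (leqP (f a) (f w)) => h.
  exists a; first exact: mem_head.
  move=> y; rewrite in_cons => /orP[/eqP->//|ys].
  exact: leq_trans h (wm y ys).
exists w; first by rewrite in_cons ws orbT.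
move=> y; rewrite in_cons => /orP[/eqP->|ys]; last exact: wm.
exact: ltnW.
Qed.

Section WithK.
Hypothesis K : forall c, c \in v -> index c v < index (p c) v.

Lemma pc_neq c : c \in v -> p c != c.
Proof. by move=> cv; apply/eqP => e; have := K cv; rewrite e ltnn. Qed.

Lemma acyclic i : forall s, uniq s -> 3 <= size s ->
  ~~ cycle (adj (Et (take i v))) s.
Proof.
move=> s Us Ss; apply/negP => Cs.
have [x0 x0s] : exists x0, x0 \in s.
  by move: Ss; case: (s) => // x ? _; exists x; rewrite mem_head.
have [w ws wmin] := seq_min (fun w => index w v) x0s.
case: (rot_to ws) => i0 s' Er.
have Cc : cycle (adj (Et (take i v))) (w :: s') by rewrite -Er rot_cycle.
have Uc : uniq (w :: s') by rewrite -Er rot_uniq.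
have Sz : 3 <= size (w :: s') by rewrite -Er size_rot.
have sub : forall y, y \in w :: s' -> y \in s by move=> y; rewrite -Er mem_rot.
move: Er sub Sz Uc Cc; case: s' => [|a [|c t2]] // _ sub _ Uc.
rewrite /= rcons_path => /and3P[hwa _ /andP[_ hbw]].
have bin : last c t2 \in c :: t2 by exact: mem_last.
have [d dc [dt wpd]] : exists2 d, d \in [:: w, a, c & t2] & (d \in take i v /\ w = p d).
  case: (adjE hwa) => [[wt awp]|[aT wpa]]; last first.
    by exists a; rewrite // !in_cons eqxx orbT.
  case: (adjE hbw) => [[bt wpb]|[_ bwp]].
    by exists (last c t2) => //; rewrite in_cons; apply/orP; right; rewrite in_cons bin orbT.
  move: Uc => /= /andP[_ /andP[+ _]].
  by rewrite awp -bwp bin.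
have dv : d \in v := mem_take dt.
have := K dv; have := wmin d (sub d dc); rewrite -wpd; lia.
Qed.

Lemma exists_root i x : exists r, r \notin take i v /\ connect (adj (Et (take i v))) x r.
Proof.
move: (leqnn (size v - index x v)); move: {2}(size v - index x v) => k.
elim: k x => [|k IH] x hk.
  case xt: (x \in take i v); last by exists x; rewrite xt; split => //; exact: connect0.
  have xv : x \in v := mem_take xt.
  by rewrite -index_mem in xv; rewrite leqn0 subn_eq0 leqNgt xv in hk.
case xt: (x \in take i v); last by exists x; rewrite xt; split => //; exact: connect0.
have xv : x \in v := mem_take xt.
have := K xv; have := index_size (p x) v; rewrite -index_mem in xv => h1 h2.
have hk' : size v - index (p x) v <= k.
  move: hk h1 h2 xv; set a := index x v; set b := index (p x) v; move=> *; lia.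
have [r [rn cr]] := IH (p x) hk'.
exists r; split => //; apply: connect_trans cr; apply: connect1.
rewrite /adj eq_sym pc_neq ?(mem_take xt) //=.
exact: imset_f.
Qed.

Lemma rsf_Fi i : is_rsf (Fi p v i).
Proof.
split; first split.
- move=> e /imsetP [z zt ->]; rewrite cards2 eq_sym pc_neq //; exact: mem_take zt.
- exact: acyclic.
- move=> x; rewrite /rf_edges /rf_roots /=.
  have [r0 [r0n cx]] := exists_root i x.
  apply/eqP/cards1P; exists r0; apply/setP => r; rewrite !inE.
  apply/andP/eqP => [[rn cr]|->]; last by [].
  apply/eqP/negPn/negP => neq.
  have := no_root_conn rn r0n neq; apply/negP/negPn.
  apply: connect_trans cx; rewrite (sym_connect_sym (@adj_sym n _)); exact: cr.
Qed.

Lemma covers_Fi i : i < size v -> covers (Fi p v i) (Fi p v i.+1).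
Proof.
move=> hi.
have [x0 _] : exists x0 : V, True by move: hi; case: (v) => // y ? _; exists y.
set x := nth x0 v i.
have xv : x \in v := mem_nth x0 hi.
have ix : index x v = i := index_uniq x0 hi Uv.
have Tx : take i.+1 v = rcons (take i v) x := take_nth x0 hi.
have xnt : x \notin take i v by rewrite index_take_mem // ix ltnn.
have pxnt : p x \notin take i v.
  case pxv: (p x \in v).
    by rewrite index_take_mem // -ix -leqNgt ltnW // K.
  by apply/negP => /mem_take; rewrite pxv.
exists (p x), x; split.
- by rewrite /Fi /rf_roots /= !inE.
- by rewrite /Fi /rf_roots /= !inE.
- by apply: no_root_conn => //; exact: pc_neq.
- rewrite /Fi /rf_edges /= Tx imset_rcons; congr (_ |: _); by rewrite setUC.
- left; apply/setP => z; rewrite /Fi /rf_roots /= !inE Tx mem_rcons in_cons.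
  by rewrite negb_or.
Qed.

End WithK.
End Main.

Section FPart.
Variable n : nat.
Notation V := 'I_n.
Variable F : rforest n.
Variable p : V -> V.
Variable v : seq V.
Hypothesis HF : is_rsf F.
Hypothesis Hpar : forall y, y \notin rf_roots F -> is_parent F (p y) y.
Hypothesis Hv : forall x, (x \in v) = (x \notin rf_roots F).
Hypothesis K : forall c, c \in v -> index c v < index (p c) v.

Lemma roots_eq x r1 r2 : r1 \in rf_roots F -> r2 \in rf_roots F ->
  connect (adj (rf_edges F)) x r1 -> connect (adj (rf_edges F)) x r2 -> r1 = r2.
Proof.
move=> r1R r2R c1 c2; case: HF => _ /(_ x) /eqP /cards1P [r0 Er0].
have : r1 \in [set r in rf_roots F | connect (adj (rf_edges F)) x r] by rewrite inE r1R c1.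
have : r2 \in [set r in rf_roots F | connect (adj (rf_edges F)) x r] by rewrite inE r2R c2.
by rewrite Er0 !inE => /eqP-> /eqP->.
Qed.

Lemma root_nil r s : r \in rf_roots F -> root_path F r s -> s = [::].
Proof.
case: s => // c s rR /and3P[P U L].
have Cr : connect (adj (rf_edges F)) r (last r (c :: s)) by apply/connectP; exists (c :: s).
have := roots_eq rR L (connect0 _ r) Cr => /= e.
by move: U; rewrite /= {1}e mem_last.
Qed.

Lemma anc : forall s x, root_path F x s -> x \in v ->
  forall y, y \in s -> index x v < index y v.
Proof.
elim=> // u s IH x rp xv y.
have xnr : x \notin rf_roots F by rewrite -Hv.
have [s'' rp2] := Hpar xnr.
have eu : u = p x.
  move: (rp) rp2 => /and3P[P1 U1 L1] /and3P[P2 U2 L2].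
  have C1 : connect (adj (rf_edges F)) x (last x (u :: s)) by apply/connectP; exists (u :: s).
  have C2 : connect (adj (rf_edges F)) x (last x (p x :: s'')) by apply/connectP; exists (p x :: s'').
  have := forest_head (proj1 HF) P1 P2 U1 U2 isT isT (roots_eq L1 L2 C1 C2).
  by [].
have rpu : root_path F u s.
  move: rp => /and3P[/= /andP[_ P] /= /andP[_ U] L].
  by rewrite /root_path P /=; apply/andP; split; [exact: U | exact: L].
rewrite in_cons => /orP[/eqP->|ys]; first by rewrite eu K.
case uv: (u \in v).
  by apply: ltn_trans (IH u rpu uv y ys); rewrite eu K.
have uR : u \in rf_roots F by move: uv; rewrite Hv => /negbFE.
by move: ys; rewrite (root_nil uR rpu).
Qed.

Lemma LE_of_K : linear_extension F v.
Proof.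
move=> x y xv yv xy [s [rp ys]].
rewrite in_cons eq_sym (negbTE xy) /= in ys.
exact: (anc rp xv ys).
Qed.
End FPart.

Theorem lemma5p11 (n : nat) (F : rforest n) (p : 'I_n -> 'I_n) (v : seq 'I_n) :
  is_rsf F ->
  (forall y, y \notin rf_roots F -> is_parent F (p y) y) ->
  uniq v ->
  (forall x, (x \in v) = (x \notin rf_roots F)) ->
  saturated_chain p v <-> linear_extension F v.
Proof.
move=> HF Hpar Uv Hv; split.
- case=> _ Hcov.
  apply: (LE_of_K HF Hpar Hv) => c cv.
  have hi : index c v < size v by rewrite index_mem.
  have Tx : take (index c v).+1 v = rcons (take (index c v) v) c.
    by rewrite (take_nth c hi) nth_index.
  case: (Hcov _ hi) => x' [y' [xr yr nc Ee _]].
  move: Ee; rewrite /Fi /rf_edges /= Tx imset_rcons => Ee.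
  have xy : x' != y' by apply: contraNneq nc => ->; exact: connect0.
  have nE : [set x'; y'] \notin [set [set x0; p x0] | x0 in take (index c v) v].
    by apply: contra nc => h; apply: connect1; rewrite /adj xy h.
  have : [set x'; y'] \in [set c; p c] |: [set [set x0; p x0] | x0 in take (index c v) v].
    by rewrite Ee setU11.
  rewrite in_setU1 (negbTE nE) orbF => /eqP Es.
  have pcr : p c \in rf_roots (Fi p v (index c v)).
    have : p c \in [set x'; y'] by rewrite Es set22.
    by case/set2P => ->.
  have pcc : p c != c.
    apply: contraNneq xy => e.
    move: (set21 x' y') (set22 x' y'); rewrite Es e setUid !inE => /eqP-> /eqP->.
    by [].
  rewrite /Fi /rf_roots /= !inE in pcr.
  case pcv: (p c \in v); last by rewrite (memNindex (negbT pcv)) index_mem.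
  rewrite index_take_mem // -leqNgt in pcr.
  rewrite ltn_neqAle pcr andbT; apply: contra pcc => /eqP e; apply/eqP.
  by rewrite -(nth_index c pcv) -e nth_index.
- move=> LE.
  have K : forall c, c \in v -> index c v < index (p c) v.
    move=> c cv.
    case pcv: (p c \in v); last by rewrite (memNindex (negbT pcv)) index_mem.
    have cnr : c \notin rf_roots F by rewrite -Hv.
    have [s rp] := Hpar c cnr.
    have neq : c != p c.
      by move: (rp) => /and3P[_ /andP[+ _] _]; rewrite in_cons negb_or => /andP[].
    apply: LE => //; exists (p c :: s); split => //.
    by rewrite !in_cons eqxx orbT.
  split => [i _|i hi]; first exact: rsf_Fi.
  exact: covers_Fi.
Qed.
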